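(* Consider $N\ge 2$ agents $x_i(k+1)=Ax_i(k)+Bu_i(k)$, $i=1,\dots,N$, with $x_i\in\mathbb{R}^n$, $u_i\in\mathbb{R}^m$, where all eigenvalues of $A$ lie in the closed unit disc and $(A,B)$ is stabilizable. Let $K$ be any matrix such that $A-BK$ is Schur stable. Each agent $i$ uses the protocol $$\eta_i(k+1)=A\eta_i(k)+Bu_i(k)+A\zeta_i(k)-A\hat\zeta_i(k),\qquad u_i(k)=-K\eta_i(k),$$ with $\zeta_i(k)=\sum_{j=1}^N d_{ij}(x_i(k)-x_j(k))$ and $\hat\zeta_i(k)=\sum_{j=1}^N d_{ij}(\eta_i(k)-\eta_j(k))$. Then for every $N$, every weighted directed graph on $N$ nodes containing a directed spanning tree, and all initial conditions $x_i(0),\eta_i(0)$, state synchronization holds: $\lim_{k\to\infty}(x_i(k)-x_j(k))=0$ for all $i,j$. In particular, the scalable state synchronization problem with localized information exchange (full-state coupling) is solvable by a protocol designed using only $(A,B)$.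
   Context: The network is a weighted directed graph with adjacency matrix $[a_{ij}]$, $a_{ij}\ge0$, $a_{ii}=0$ ($a_{ij}>0$ means an edge from $j$ to $i$); weighted in-degree $d_{in}(i)=\sum_j a_{ij}$. The row stochastic matrix $D=[d_{ij}]$ is given by $d_{ij}=a_{ij}/(1+d_{in}(i))$ for $j\ne i$ and $d_{ii}=1-\sum_{j\neq i}d_{ij}=1/(1+d_{in}(i))$, so that $\zeta_i=\frac{1}{1+d_{in}(i)}\sum_j a_{ij}(x_i-x_j)$. A square matrix is Schur stable if all its eigenvalues lie in the open unit disc. A directed spanning tree is a subgraph containing all nodes in which every node except one root has exactly one parent. *)

(* Defs.v *)
From HB Require Import structures.
From mathcomp Require Import all_boot all_order all_algebra.
From mathcomp Require Import all_classical all_reals all_analysis.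
From mathcomp Require Import complex.
Set Implicit Arguments. Unset Strict Implicit. Unset Printing Implicit Defensive.
Import Order.TTheory GRing.Theory Num.Theory.
Local Open Scope ring_scope.

Definition cmx (R : rcfType) (n : nat) (A : 'M[R]_n) : 'M[R[i]]_n :=
  map_mx (real_complex R) A.

Definition schur_stable (R : rcfType) (n : nat) (A : 'M[R]_n) : Prop :=
  forall l : R[i], eigenvalue (cmx A) l -> `|l| < 1.

Definition eig_in_closed_disc (R : rcfType) (n : nat) (A : 'M[R]_n) : Prop :=
  forall l : R[i], eigenvalue (cmx A) l -> `|l| <= 1.

Definition stabilizable (R : rcfType) (n m : nat) (A : 'M[R]_n) (B : 'M[R]_(n, m)) : Prop :=
  exists F : 'M[R]_(m, n), schur_stable (A - B *m F).

(* weighted adjacency matrix: a i j >= 0, a i i = 0; a i j > 0 means edge j -> i *)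
Definition weighted_adjacency (R : numDomainType) (N : nat) (a : 'M[R]_N) : Prop :=
  (forall i j, 0 <= a i j) /\ (forall i, a i i = 0).

(* contains a directed spanning tree: a root r and a parent map p such that every
   non-root node i has the edge (p i) -> i (i.e. a i (p i) > 0), and following
   parents from any node leads to the root (so the parent edges form a tree). *)
Definition has_spanning_tree (R : numDomainType) (N : nat) (a : 'M[R]_N) : Prop :=
  exists (r : 'I_N) (p : 'I_N -> 'I_N),
    (forall i, i != r -> 0 < a i (p i)) /\
    (forall i, exists k : nat, iter k p i = r).

Definition din (R : numDomainType) (N : nat) (a : 'M[R]_N) (i : 'I_N) : R :=
  \sum_(j < N) a i j.

Definition dmat (R : numFieldType) (N : nat) (a : 'M[R]_N) : 'M[R]_N :=
  \matrix_(i, j) (if i == j then 1 / (1 + din a i) else a i j / (1 + din a i)).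

(* Main.v *)
Require Import Defs.
From HB Require Import structures.
From mathcomp Require Import all_boot all_order all_algebra.
From mathcomp Require Import all_classical all_reals all_analysis.
From mathcomp Require Import complex.
From mathcomp Require Import ring lra zify.
Set Implicit Arguments. Unset Strict Implicit. Unset Printing Implicit Defensive.
Import Order.TTheory GRing.Theory Num.Theory.
Import numFieldNormedType.Exports.
Local Open Scope classical_set_scope.
Local Open Scope ring_scope.
Local Open Scope complex_scope.


Lemma sum_ge_term (C : numFieldType) (I : finType) (f : I -> C) j :
  (forall i, 0 <= f i) -> f j <= \sum_i f i.
Proof.
move=> f0; rewrite (bigD1 j) //= lerDl; exact: sumr_ge0.
Qed.

Lemma rowsum_pow (C : numFieldType) n (X : 'M[C]_n) (g : C) : 0 <= g ->
  (forall i, \sum_j `|X i j| <= g) -> forall k i, \sum_j `|(X ^+ k) i j| <= g ^+ k.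
Proof.
move=> g0 hX; elim=> [|k IH] i.
  rewrite expr0 (bigD1 i) //= big1 => [|j /negPf ji]; last by rewrite mxE eq_sym ji normr0.
  by rewrite mxE eqxx normr1 addr0.
rewrite exprS -mulmxE.
apply: (le_trans (y := \sum_j \sum_l `|X i l| * `|(X ^+ k) l j|)).
  apply: ler_sum => j _; rewrite mxE; apply: (le_trans (ler_norm_sum _ _ _)).
  by apply: ler_sum => l _; rewrite normrM.
rewrite exchange_big /= exprS.
apply: (le_trans (y := \sum_l `|X i l| * g ^+ k)).
  apply: ler_sum => l _; rewrite -mulr_sumr; apply: ler_wpM2l => //; exact: IH.
by rewrite -mulr_suml ler_wpM2r // exprn_ge0.
Qed.

Lemma trig_pow_bound (C : numFieldType) n (T : 'M[C]_n) (mu rho : C) : is_trig_mx T -> 0 <= mu ->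
  (forall i, `|T i i| <= mu) -> mu < rho ->
  exists K : C, 0 <= K /\ forall k i j, `|(T ^+ k) i j| <= K * rho ^+ k.
Proof.
move=> /is_trig_mxP Ttrig mu0 Tmu murho.
set d := rho - mu. have d0 : 0 < d by rewrite subr_gt0.
have rho0 : 0 <= rho by apply: ltW; apply: le_lt_trans murho.
set Ts : C := \sum_i \sum_j `|T i j|.
have Ts0 : 0 <= Ts by apply: sumr_ge0 => i _; apply: sumr_ge0.
have dTs0 : 0 < d + Ts by apply: ltr_wpDr.
set e := d / (d + Ts).
have e0 : 0 < e by rewrite divr_gt0.
have e1 : e <= 1 by rewrite ler_pdivrMr // mul1r lerDl.
have eTs : e * Ts <= d.
  rewrite mulrAC ler_pdivrMr //; apply: ler_wpM2l; [exact: ltW | by rewrite -subr_ge0 addrK ltW].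
set X := \matrix_(i, j) (e ^+ i / e ^+ j * T i j) : 'M[C]_n.
have eX : forall i, e ^+ i != 0 by move=> i; rewrite expf_neq0 // gt_eqF.
have Xk : forall k i j, (X ^+ k) i j = e ^+ i / e ^+ j * (T ^+ k) i j.
  elim=> [|k IH] i j.
    rewrite !expr0 !mxE; case: (i =P j) => [->|_]; by rewrite ?divff ?mul1r ?mulr0.
  rewrite !exprS -!mulmxE !mxE mulr_sumr; apply: eq_bigr => l _.
  rewrite IH !mxE. have := eX l; have := eX j; have := eX i. move=> *. field. by rewrite !eX.
have Xrow : forall i, \sum_j `|X i j| <= rho.
  move=> i; rewrite (bigD1 i) //= mxE divff // mul1r.
  have -> : rho = mu + d by rewrite /d; ring.
  apply: lerD; first exact: Tmu.
  apply: (le_trans (y := \sum_j e * `|T i j|)).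
    rewrite [X in _ <= X](bigD1 i) //= -[X in X <= _]add0r; apply: lerD.
      by rewrite mulr_ge0 // ltW.
    apply: ler_sum => j ji; rewrite mxE normrM.
    case: (ltngtP i j) => [ij|ji'|/val_inj ij]; last by rewrite ij eqxx in ji.
      by rewrite Ttrig // normr0 !mulr0.
    apply: ler_wpM2r => //; rewrite -expfB // ger0_norm; last by rewrite exprn_ge0 // ltW.
    rewrite -[X in _ <= X]expr1; apply: ler_wiXn2l => //; first exact: ltW.
    by rewrite subn_gt0.
  rewrite -mulr_sumr; apply: (le_trans _ eTs); apply: ler_wpM2l; first exact: ltW.
  rewrite /Ts [X in _ <= X](bigD1 i) //= lerDl; apply: sumr_ge0 => i1 _; by apply: sumr_ge0.
exists ((e ^+ n)^-1); split; first by have := invr_ge0 (e ^+ n); move=> ->; rewrite exprn_ge0 // ltW.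
move=> k i j.
have -> : (T ^+ k) i j = e ^+ j / e ^+ i * (X ^+ k) i j.
  rewrite Xk; have := eX i; have := eX j; move=> *; field; by apply/andP.
rewrite normrM ger0_norm; last by rewrite divr_ge0 // exprn_ge0 // ltW.
apply: (le_trans (y := (e ^+ i)^-1 * rho ^+ k)); last first.
  apply: ler_wpM2r; first exact: exprn_ge0.
  rewrite lef_pV2 ?posrE ?exprn_gt0 //; apply: ler_wiXn2l => //; first exact: ltW.
  exact: ltnW.
apply: ler_pM.
- by rewrite divr_ge0 // exprn_ge0 // ltW.
- by [].
- by rewrite -[X in _ <= X]mul1r ler_wpM2r ?exprn_ile1 ?invr_ge0 ?exprn_ge0 // ltW.
have H := rowsum_pow rho0 Xrow k i; apply: le_trans H.
by apply: sum_ge_term => l; apply: normr_ge0.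
Qed.

Lemma mul3_bound (C : numDomainType) n (Q T P : 'M[C]_n) (bnd : C) : 0 <= bnd ->
  (forall a b, `|T a b| <= bnd) -> forall i j,
  `|(Q *m T *m P) i j| <= (\sum_a \sum_b `|Q a b|) * (\sum_a \sum_b `|P a b|) * bnd.
Proof.
move=> b0 hT i j; rewrite !mxE.
apply: (le_trans (ler_norm_sum _ _ _)).
apply: (le_trans (y := \sum_b (\sum_a `|Q i a| * bnd) * `|P b j|)).
  apply: ler_sum => b _; rewrite normrM mxE; apply: ler_wpM2r => //.
  apply: (le_trans (ler_norm_sum _ _ _)); apply: ler_sum => a _; rewrite normrM.
  by apply: ler_wpM2l.
rewrite -mulr_sumr -mulr_suml mulrAC; apply: ler_wpM2r => //.
have sQ : \sum_a `|Q i a| <= \sum_a \sum_b `|Q a b|.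
  by rewrite [X in _ <= X](bigD1 i) //= lerDl; apply: sumr_ge0 => a _; apply: sumr_ge0.
have sP : \sum_b `|P b j| <= \sum_a \sum_b `|P a b|.
  rewrite exchange_big /=.
  by rewrite [X in _ <= X](bigD1 j) //= lerDl; apply: sumr_ge0 => a _; apply: sumr_ge0.
apply: ler_pM => //; by apply: sumr_ge0.
Qed.


Lemma normC_real (R : realType) (x : R) : `|x%:C| = `|x|%:C.
Proof. by rewrite normc_def /= expr0n addr0 sqrtr_sqr. Qed.

Lemma normC_Re (R : realType) (z : R[i]) : `|z| = (complex.Re `|z|)%:C.
Proof. by rewrite normc_def. Qed.

Lemma ge0_Re (R : realType) (z : R[i]) : 0 <= z -> z = (complex.Re z)%:C.
Proof. by case: z => a b H; have /= := ger0_Im H => ->. Qed.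

Lemma cmxX (R : realType) n (M : 'M[R]_n) k : cmx (M ^+ k) = (cmx M) ^+ k.
Proof.
elim: k => [|k IH]; first by rewrite !expr0 /cmx map_mx1.
by rewrite !exprS -!mulmxE /cmx map_mxM; congr (_ *m _); exact: IH.
Qed.


Lemma pow_bound (R : realType) n (M : 'M[R]_n) : exists mu : R, 0 <= mu /\
  (forall b : R, 0 < b -> (forall l : R[i], eigenvalue (cmx M) l -> `|l| < b%:C) -> mu < b) /\
  (forall rho, mu < rho -> exists K : R, 0 <= K /\ forall k i j, `|(M ^+ k) i j| <= K * rho ^+ k).
Proof.
case: n M => [|n] M.
  exists 0; split => //; split => // rho rho0; exists 0; split => // k [] //.
have [P Pu Ttrig] := Schur (cmx M) (ltn0Sn n).
set T := conjmx P (cmx M) in Ttrig.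
have Punit := unitarymx_unit Pu.
have TE : T = P *m cmx M *m invmx P by rewrite /T conjumx.
have McE : cmx M = invmx P *m T *m P by rewrite TE !mulmxA mulVmx // mul1mx mulmxKV.
have MkE : forall k, cmx M ^+ k = invmx P *m (T ^+ k) *m P.
  elim=> [|k IH]; first by rewrite !expr0 mulmx1 mulVmx.
  by rewrite !exprS -!mulmxE IH {1}McE -!mulmxA mulKVmx.
have Teig : forall i, eigenvalue (cmx M) (T i i).
  move=> i; have H : eigenvalue T (T i i).
    rewrite eigenvalue_root_char char_poly_trig // /root horner_prod (bigD1 i) //=.
    by rewrite hornerXsubC subrr mul0r.
  apply: (eigenvalue_conjmx (V := P) _ _ H).
  - by apply: stablemx_full; rewrite row_full_unit.
  - by rewrite row_free_unit.
pose mu := \big[Order.max/0]_i complex.Re `|T i i|.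
have Tmu : forall i, `|T i i| <= mu%:C.
  by move=> i; rewrite normC_Re lecR /mu; apply: le_bigmax.
have Re0 : forall z : R[i], 0 <= complex.Re `|z|.
  by move=> z; rewrite -ler0c -normC_Re.
have mu0 : 0 <= mu by apply: le_trans (Re0 (T ord0 ord0)) _; apply: le_bigmax.
exists mu; split => //; split.
  move=> b b0 hb; apply: bigmax_lt => // i _.
  by rewrite -ltcR -normC_Re; apply: hb.
move=> rho murho.
have mu0C : 0 <= mu%:C by rewrite ler0c.
have murhoC : mu%:C < rho%:C by rewrite ltcR.
have [K [K0 HK]] := trig_pow_bound Ttrig mu0C Tmu murhoC.
set Kc := (\sum_a \sum_b `|invmx P a b|) * (\sum_a \sum_b `|P a b|) * K.
have Kc0 : 0 <= Kc by rewrite !mulr_ge0 //; apply: sumr_ge0 => a _; apply: sumr_ge0.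
exists (complex.Re Kc); split; first by rewrite -ler0c -ge0_Re.
move=> k i j.
rewrite -lecR -normC_real rmorphM /= rmorphXn -ge0_Re //.
have -> : ((M ^+ k) i j)%:C = (cmx (M ^+ k)) i j by rewrite mxE.
rewrite cmxX MkE /Kc -[_ * K * _]mulrA; apply: mul3_bound; last by move=> a b; apply: HK.
by rewrite mulr_ge0 // exprn_ge0 // ler0c; apply: le_trans mu0 (ltW murho).
Qed.


Lemma sum_ge_term' (R : realType) (I : finType) (f : I -> R) j :
  (forall i, 0 <= f i) -> f j <= \sum_i f i.
Proof. move=> f0; rewrite (bigD1 j) //= lerDl; exact: sumr_ge0. Qed.

Lemma dmat_ge0 (R : realType) N (a : 'M[R]_N) : weighted_adjacency a ->
  forall i j, 0 <= dmat a i j.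
Proof.
move=> [a0 _] i j; have d0 : 0 < 1 + din a i.
  by apply: ltr_pwDl => //; apply: sumr_ge0 => k _.
rewrite mxE; case: (i == j); apply: divr_ge0 => //; exact: ltW.
Qed.

Lemma din_gt0 (R : realType) N (a : 'M[R]_N) : weighted_adjacency a ->
  forall i, 0 < 1 + din a i.
Proof. move=> [a0 _] i; apply: ltr_pwDl => //; apply: sumr_ge0 => k _; exact: a0. Qed.

Lemma dmat_sum (R : realType) N (a : 'M[R]_N) : weighted_adjacency a ->
  forall i, \sum_j dmat a i j = 1.
Proof.
move=> wa i; have d0 := din_gt0 wa i.
have -> : \sum_j dmat a i j = \sum_j (if i == j then 1 else a i j) / (1 + din a i).
  by apply: eq_bigr => j _; rewrite mxE; case: (i == j).
rewrite -mulr_suml (bigD1 i) //= eqxx.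
have -> : \sum_(j | j != i) (if i == j then 1 else a i j) = din a i.
  rewrite /din [RHS](bigD1 i) //= wa.2 add0r; apply: eq_bigr => j ji.
  by rewrite eq_sym (negPf ji).
by rewrite divff // gt_eqF.
Qed.

Lemma dmat_diag (R : realType) N (a : 'M[R]_N) : weighted_adjacency a ->
  forall i, 0 < dmat a i i.
Proof. move=> wa i; rewrite mxE eqxx; apply: divr_gt0 => //; exact: din_gt0. Qed.

Lemma dmat_edge (R : realType) N (a : 'M[R]_N) : weighted_adjacency a ->
  forall i j, i != j -> 0 < a i j -> 0 < dmat a i j.
Proof. move=> wa i j ij aij; rewrite mxE (negPf ij); apply: divr_gt0 => //; exact: din_gt0. Qed.

Definition stoch (R : realType) N (P : 'M[R]_N) :=
  (forall i j, 0 <= P i j) /\ (forall i, \sum_j P i j = 1).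

Lemma stochM (R : realType) N (P Q : 'M[R]_N) : stoch P -> stoch Q -> stoch (P * Q).
Proof.
move=> [P0 P1] [Q0 Q1]; split.
  by move=> i j; rewrite -mulmxE mxE; apply: sumr_ge0 => l _; apply: mulr_ge0.
move=> i; rewrite -mulmxE.
under eq_bigr do rewrite mxE.
rewrite exchange_big /=.
under eq_bigr do rewrite -mulr_sumr Q1 mulr1.
exact: P1.
Qed.

Lemma stochX (R : realType) N (P : 'M[R]_N) k : stoch P -> stoch (P ^+ k).
Proof.
move=> sP; elim: k => [|k IH].
  rewrite expr0; split=> [i j|i]; first by rewrite mxE; case: (i == j).
  rewrite (bigD1 i) //= big1 => [|j /negPf ji]; last by rewrite mxE eq_sym ji.
  by rewrite mxE eqxx addr0.
by rewrite exprS; apply: stochM.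
Qed.

Lemma stoch_le1 (R : realType) N (P : 'M[R]_N) : stoch P -> forall i j, P i j <= 1.
Proof. move=> [P0 P1] i j; rewrite -(P1 i); exact: sum_ge_term'. Qed.

Lemma mulmx_entry_ge (R : realType) N (P Q : 'M[R]_N) i j l :
  (forall i j, 0 <= P i j) -> (forall i j, 0 <= Q i j) ->
  P i l * Q l j <= (P * Q) i j.
Proof.
move=> P0 Q0; rewrite -mulmxE mxE.
by apply: (@sum_ge_term' R _ (fun l => P i l * Q l j)) => l'; apply: mulr_ge0.
Qed.

Lemma root_pos (R : realType) N (D : 'M[R]_N) r : stoch D -> (forall i, 0 < D i i) ->
  forall t, 0 < (D ^+ t) r r.
Proof.
move=> sD Dd; elim=> [|t IH]; first by rewrite expr0 mxE eqxx ltr01.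
rewrite exprS; apply: lt_le_trans (mulmx_entry_ge r r r sD.1 (stochX t sD).1).
exact: mulr_gt0.
Qed.

Lemma path_pos (R : realType) N (D : 'M[R]_N) r (p : 'I_N -> 'I_N) :
  stoch D -> (forall i, 0 < D i i) -> (forall i, i != r -> 0 < D i (p i)) ->
  forall m i, iter m p i = r -> forall t, (m <= t)%N -> 0 < (D ^+ t) i r.
Proof.
move=> sD Dd Dp; elim=> [|m IH] i.
  by move=> /= -> t _; exact: root_pos.
rewrite iterSr => hi t.
case: (i =P r) => [-> _|/eqP ir]; first exact: root_pos.
case: t => [//|t] mt.
rewrite exprS; apply: lt_le_trans (mulmx_entry_ge i r (p i) sD.1 (stochX t sD).1).
apply: mulr_gt0; first exact: Dp.
by apply: IH.
Qed.

Lemma scramble (R : realType) N (D : 'M[R]_N) r (p : 'I_N -> 'I_N) :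
  stoch D -> (forall i, 0 < D i i) -> (forall i, i != r -> 0 < D i (p i)) ->
  (forall i, exists k : nat, iter k p i = r) ->
  exists T0 : nat, exists c : R, (0 < T0)%N /\ 0 < c /\ c <= 1 /\
    forall i, c <= (D ^+ T0) i r.
Proof.
move=> sD Dd Dp hk.
have [f hf] := choice hk.
pose T0 := (\max_i f i).+1.
pose c := \big[Order.min/1]_i (D ^+ T0) i r.
exists T0, c; split => //; split; last split.
- apply: lt_bigmin => // i _; apply: (path_pos sD Dd Dp (hf i)).
  by apply: leqW; apply: leq_bigmax.
- exact: bigmin_le_id.
- by move=> i; apply: bigmin_le.
Qed.

Lemma contract (R : realType) N (P : 'M[R]_N) r (c : R) (w : 'I_N -> R) lo hi :
  stoch P -> (forall i, c <= P i r) -> 0 <= c ->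
  (forall l, lo <= w l <= hi) ->
  forall i, lo + c * (w r - lo) <= \sum_l P i l * w l <= hi - c * (hi - w r).
Proof.
move=> [P0 P1] Pc c0 hw i.
have E : forall x, \sum_l P i l * w l - x = \sum_l P i l * (w l - x).
  move=> x; under [RHS]eq_bigr do rewrite mulrBr.
  by rewrite sumrB -mulr_suml P1 mul1r.
have [lor rhi] := andP (hw r).
have H1 : c * (w r - lo) <= P i r * (w r - lo) by apply: ler_wpM2r; rewrite ?subr_ge0.
have H2 : P i r * (w r - lo) <= \sum_l P i l * (w l - lo).
  apply: (@sum_ge_term' R _ (fun l => P i l * (w l - lo))) => l.
  by rewrite mulr_ge0 // subr_ge0; case/andP: (hw l).
have H3 : \sum_l P i l * (w l - hi) <= P i r * (w r - hi).
  rewrite (bigD1 r) //= -[X in _ <= X]addr0; apply: lerD => //.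
  rewrite -oppr_ge0 -sumrN; apply: sumr_ge0 => l _.
  by rewrite -mulrN mulr_ge0 // oppr_ge0 subr_le0; case/andP: (hw l).
have H4 : P i r * (w r - hi) <= c * (w r - hi) by apply: ler_wnM2r; rewrite ?subr_le0.
move: H1 H2 H3 H4; rewrite -!E => H1 H2 H3 H4.
apply/andP; split; lra.
Qed.

Lemma osc (R : realType) N (D : 'M[R]_N) r T0 (c : R) : stoch D -> (0 < T0)%N ->
  0 <= c -> c <= 1 -> (forall i, c <= (D ^+ T0) i r) ->
  forall l k, exists lo hi : R, hi - lo <= (1 - c) ^+ (k %/ T0) /\
    forall i, lo <= (D ^+ k) i l <= hi.
Proof.
move=> sD T0p c0 c1 Dc l; elim/ltn_ind => k IH.
case: (ltnP k T0) => kT.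
  exists 0, 1; rewrite divn_small // expr0 subr0; split => // i.
  by apply/andP; split; [exact: (stochX k sD).1 | exact: stoch_le1 (stochX k sD) _ _].
have kT' : (k - T0 < k)%N by rewrite ltn_subrL T0p; apply: leq_trans kT.
have [lo [hi [Hlh Hw]]] := IH _ kT'.
set w := fun j => (D ^+ (k - T0)) j l.
exists (lo + c * (w r - lo)), (hi - c * (hi - w r)); split.
  have -> : (k %/ T0 = (k - T0) %/ T0 + 1)%N.
    by rewrite -{1}(subnK kT) divnDr ?dvdnn // divnn T0p.
  rewrite addn1 exprS.
  have -> : hi - c * (hi - w r) - (lo + c * (w r - lo)) = (1 - c) * (hi - lo) by ring.
  by apply: ler_wpM2l => //; rewrite subr_ge0.
move=> i.
have -> : (D ^+ k) i l = \sum_j (D ^+ T0) i j * w j.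
  by rewrite -{1}(subnKC kT) exprD -mulmxE mxE.
apply: contract => //; exact: stochX.
Qed.

Lemma expr_le (R : realType) (x y : R) n : 0 <= x -> x <= y -> x ^+ n <= y ^+ n.
Proof.
move=> x0 xy; elim: n => [|n IH]; first by rewrite !expr0.
by rewrite !exprS; apply: ler_pM => //; exact: exprn_ge0.
Qed.

Lemma bernoulli (R : realType) (x : R) n : 0 <= x -> x <= 1 -> 1 - n%:R * x <= (1 - x) ^+ n.
Proof.
move=> x0 x1; elim: n => [|n IH]; first by rewrite expr0 mul0r subr0.
rewrite exprS.
have h1 : 0 <= 1 - x by rewrite subr_ge0.
have := ler_wpM2l h1 IH.
have n0 : 0 <= n%:R :> R by [].
rewrite -natr1; nra.
Qed.

Lemma geom_rate (R : realType) (c : R) T0 : 0 < c -> c <= 1 -> (0 < T0)%N ->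
  let th := 1 - c / T0.+1%:R in
  0 < th /\ th < 1 /\ forall k, (1 - c) ^+ (k %/ T0) <= th ^+ k / th ^+ T0.
Proof.
move=> c0 c1 T0p th.
have T1 : 0 < T0.+1%:R :> R by [].
have cT : c / T0.+1%:R <= c.
  have T1' : 1 <= T0.+1%:R :> R by rewrite ler1n.
  rewrite ler_pdivrMr //; nra.
have cT0 : 0 < c / T0.+1%:R by apply: divr_gt0.
have cT1 : c / T0.+1%:R < 1.
  rewrite ltr_pdivrMr // mul1r; apply: le_lt_trans c1 _; by rewrite ltr1n.
have th0 : 0 < th by rewrite /th subr_gt0.
have th1 : th < 1 by rewrite /th ltrBlDr ltrDl.
split => //; split => // k.
have hb : 1 - c <= th ^+ T0.
  apply: le_trans (bernoulli T0 (ltW cT0) (ltW cT1)).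
  rewrite lerB // mulrA ler_pdivrMr // mulrC ler_wpM2l ?ltW //.
  by rewrite ltr_nat.
apply: (le_trans (y := th ^+ (T0 * (k %/ T0)))).
  by rewrite exprM; apply: expr_le => //; rewrite subr_ge0.
rewrite ler_pdivlMr ?exprn_gt0 // -exprD.
apply: ler_wiXn2l => //; first exact: ltW; first exact: ltW.
rewrite addnC -mulnS mulnC; apply: ltnW; exact: ltn_ceil.
Qed.

Definition L1 (R : realType) m n (X : 'M[R]_(m, n)) : R := \sum_i \sum_j `|X i j|.

Lemma L1_ge0 (R : realType) m n (X : 'M[R]_(m, n)) : 0 <= L1 X.
Proof. by apply: sumr_ge0 => i _; apply: sumr_ge0. Qed.

Lemma L1_entry (R : realType) m n (X : 'M[R]_(m, n)) i j : `|X i j| <= L1 X.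
Proof.
have h1 : `|X i j| <= \sum_j `|X i j|.
  by apply: (@sum_ge_term' R _ (fun j => `|X i j|) j).
apply: le_trans h1 _.
by apply: (@sum_ge_term' R _ (fun i => \sum_j `|X i j|) i) => i'; apply: sumr_ge0.
Qed.

Lemma L1D (R : realType) m n (X Y : 'M[R]_(m, n)) : L1 (X + Y) <= L1 X + L1 Y.
Proof.
rewrite /L1 -big_split; apply: ler_sum => i _; rewrite -big_split; apply: ler_sum => j _.
by rewrite mxE ler_normD.
Qed.

Lemma L1B (R : realType) m n (X Y : 'M[R]_(m, n)) : L1 (X - Y) <= L1 X + L1 Y.
Proof.
rewrite /L1 -big_split; apply: ler_sum => i _; rewrite -big_split; apply: ler_sum => j _.
by rewrite !mxE ler_normB.
Qed.

Lemma L1Z (R : realType) m n (c : R) (X : 'M[R]_(m, n)) : L1 (c *: X) = `|c| * L1 X.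
Proof.
rewrite /L1 mulr_sumr; apply: eq_bigr => i _; rewrite mulr_sumr; apply: eq_bigr => j _.
by rewrite mxE normrM.
Qed.

Lemma L1M (R : realType) m n p (X : 'M[R]_(m, n)) (Y : 'M[R]_(n, p)) :
  L1 (X *m Y) <= L1 X * L1 Y.
Proof.
rewrite /L1 mulr_suml; apply: ler_sum => i _.
apply: (le_trans (y := \sum_j \sum_l `|X i l| * `|Y l j|)).
  apply: ler_sum => j _; rewrite mxE; apply: (le_trans (ler_norm_sum _ _ _)).
  by apply: ler_sum => l _; rewrite normrM.
rewrite exchange_big /= mulr_suml; apply: ler_sum => l _.
rewrite -mulr_sumr; apply: ler_wpM2l => //.
by apply: (@sum_ge_term' R _ (fun l => \sum_j `|Y l j|) l) => l'; apply: sumr_ge0.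
Qed.

Lemma L1_sum (R : realType) m n k (F : nat -> 'M[R]_(m, n)) :
  L1 (\sum_(t < k) F t) <= \sum_(t < k) L1 (F t).
Proof.
elim: k => [|k IH]; first by rewrite !big_ord0 /L1 big1 // => i _; rewrite big1 // => j _; rewrite mxE normr0.
rewrite !big_ord_recr /=; apply: le_trans (L1D _ _) _; exact: lerD.
Qed.

Lemma L1_bound (R : realType) m n (X : 'M[R]_(m, n)) (al : R) :
  (forall i j, `|X i j| <= al) -> L1 X <= (m * n)%:R * al.
Proof.
move=> hX; apply: (le_trans (y := \sum_(i < m) \sum_(j < n) al)).
  by apply: ler_sum => i _; apply: ler_sum => j _.
by rewrite !sumr_const !card_ord -mulrnA mulr_natl mulnC.
Qed.

Lemma norm_le_L1 (R : realType) n (X : 'cV[R]_n) : `|X| <= L1 X.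
Proof.
rewrite /Num.norm /=. rewrite mx_normrE; apply: bigmax_le; first exact: L1_ge0.
by move=> ij _; apply: L1_entry.
Qed.

Lemma L1_cvg (R : realType) n (z : nat -> 'cV[R]_n) (C q : R) : 0 <= q -> q < 1 ->
  (forall k, L1 (z k) <= C * q ^+ k) -> z @ \oo --> (0 : 'cV[R]_n).
Proof.
move=> q0 q1 hz; apply/cvgr0Pnorm_le => eps eps0.
have hg : geometric C q @ \oo --> (0 : R).
  by apply: cvg_geometric; rewrite ger0_norm.
have H := @cvgr0_norm_le _ _ _ _ _ (geometric C q) hg eps eps0.
near=> k.
have hk : `|geometric C q k| <= eps. near: k. exact: (H _).
apply: le_trans (norm_le_L1 _) _; apply: le_trans (hz k) _.
apply: le_trans hk; exact: ler_norm.
Unshelve. all: by end_near.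
Qed.

Lemma closed_form (R : realType) n (M : 'M[R]_n) (z w : nat -> 'cV[R]_n) :
  (forall k, z k.+1 = M *m z k + w k) ->
  forall k, z k = M ^+ k *m z 0 + \sum_(t < k) M ^+ (k.-1 - t) *m w t.
Proof.
move=> hz; elim=> [|k IH]; first by rewrite expr0 mul1mx big_ord0 addr0.
rewrite hz IH mulmxDr mulmxA big_ord_recr /= subnn expr0 mul1mx addrA.
congr (_ + _ + _); first by rewrite exprS -mulmxE.
rewrite mulmx_sumr; apply: eq_bigr => t _; rewrite mulmxA.
have -> : (k - t = (k.-1 - t).+1)%N by have := ltn_ord t; lia.
by rewrite exprS -mulmxE.
Qed.

Lemma geom_sum (R : realType) (q th : R) k : 0 <= th -> th < q ->
  \sum_(t < k) q ^+ (k.-1 - t) * th ^+ t <= q ^+ k / (q - th).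
Proof.
move=> th0 thq; have qth : 0 < q - th by rewrite subr_gt0.
rewrite ler_pdivlMr // mulrC -subrXX lerBlDr lerDl; exact: exprn_ge0.
Qed.

Lemma conv_bound (R : realType) n (M : 'M[R]_n) (z w : nat -> 'cV[R]_n) (C4 q W th : R) :
  0 <= C4 -> 0 <= th -> th < q -> 0 <= W ->
  (forall k, L1 (M ^+ k) <= C4 * q ^+ k) -> (forall t, L1 (w t) <= W * th ^+ t) ->
  (forall k, z k.+1 = M *m z k + w k) ->
  forall k, L1 (z k) <= C4 * (L1 (z 0) + W / (q - th)) * q ^+ k.
Proof.
move=> C40 th0 thq W0 hM hw hz k.
have q0 : 0 <= q by apply: le_trans th0 (ltW thq).
rewrite (closed_form hz k); apply: le_trans (L1D _ _) _.
have h1 : L1 (M ^+ k *m z 0) <= C4 * q ^+ k * L1 (z 0).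
  apply: le_trans (L1M _ _) _; apply: ler_wpM2r => //; exact: L1_ge0.
have h2 : L1 (\sum_(t < k) M ^+ (k.-1 - t) *m w t) <=
    C4 * W * \sum_(t < k) q ^+ (k.-1 - t) * th ^+ t.
  apply: le_trans (@L1_sum R n 1 k (fun t => M ^+ (k.-1 - t) *m w t)) _.
  rewrite mulr_sumr; apply: ler_sum => t _.
  apply: le_trans (L1M _ _) _.
  have e1 : 0 <= th ^+ t by apply: exprn_ge0.
  have e2 : 0 <= q ^+ (k.-1 - t) by apply: exprn_ge0.
  have -> : C4 * W * (q ^+ (k.-1 - t) * th ^+ t) = (C4 * q ^+ (k.-1 - t)) * (W * th ^+ t) by ring.
  by apply: ler_pM; [exact: L1_ge0 | exact: L1_ge0 | exact: hM | exact: hw].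
have h3 := geom_sum k th0 thq.
have h4 : C4 * W * \sum_(t < k) q ^+ (k.-1 - t) * th ^+ t <= C4 * W * (q ^+ k / (q - th)).
  by apply: ler_wpM2l => //; apply: mulr_ge0.
have qth : 0 < q - th by rewrite subr_gt0.
have -> : C4 * (L1 (z 0) + W / (q - th)) * q ^+ k =
    C4 * q ^+ k * L1 (z 0) + C4 * W * (q ^+ k / (q - th)) by field; rewrite gt_eqF.
apply: lerD => //; exact: le_trans h4.
Qed.

Lemma L1_sumI (R : realType) m n (I : finType) (F : I -> 'M[R]_(m, n)) :
  L1 (\sum_i F i) <= \sum_i L1 (F i).
Proof.
elim/big_rec2: _ => [|i y1 y2 _ IH].
  by rewrite /L1 big1 // => a _; rewrite big1 // => b _; rewrite mxE normr0.
apply: le_trans (L1D _ _) _; exact: lerD.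
Qed.

Lemma addid1 (R : realType) m n (p q r s t : 'M[R]_(m, n)) :
  (p + q) - (r + q + s - t) = (p - r) - (s - t).
Proof. by apply/matrixP => a b; rewrite !mxE; ring. Qed.

Lemma addid2 (R : realType) m n (p q r s : 'M[R]_(m, n)) :
  (p - q) - (r - s) = (p - r) - (q - s).
Proof. by apply/matrixP => a b; rewrite !mxE; ring. Qed.

Lemma addid3 (R : realType) m n (p q s t u v : 'M[R]_(m, n)) :
  (p - u) - (q - v) = (p - q - (s - t)) + ((s - u) - (t - v)).
Proof. by apply/matrixP => a b; rewrite !mxE; ring. Qed.

Lemma e_step (R : realType) n m N (A : 'M[R]_n) (B : 'M[R]_(n, m)) (D : 'M[R]_N)
  (x eta : 'I_N -> nat -> 'cV[R]_n) (u : 'I_N -> nat -> 'cV[R]_m) :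
  (forall i, \sum_j D i j = 1) ->
  (forall i k, x i k.+1 = A *m x i k + B *m u i k) ->
  (forall i k, eta i k.+1 =
      A *m eta i k + B *m u i k
      + A *m (\sum_(j < N) D i j *: (x i k - x j k))
      - A *m (\sum_(j < N) D i j *: (eta i k - eta j k))) ->
  forall i k, x i k.+1 - eta i k.+1 = A *m \sum_j D i j *: (x j k - eta j k).
Proof.
move=> D1 hx heta i k; rewrite hx heta.
set S1 := \sum_(j < N) D i j *: (x i k - x j k).
set S2 := \sum_(j < N) D i j *: (eta i k - eta j k).
have H : \sum_j D i j *: (x j k - eta j k) = (x i k - eta i k) - (S1 - S2).
  rewrite /S1 /S2 -sumrB.
  have -> : \sum_j (D i j *: (x i k - x j k) - D i j *: (eta i k - eta j k)) =
      \sum_j D i j *: (x i k - eta i k) - \sum_j D i j *: (x j k - eta j k).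
    rewrite -sumrB; apply: eq_bigr => j _; rewrite -!scalerBr; congr (_ *: _).
    exact: addid2.
  by rewrite -scaler_suml D1 scale1r opprB addrC subrK.
by rewrite H !mulmxBr addid1.
Qed.

Lemma e_closed (R : realType) n N (A : 'M[R]_n) (D : 'M[R]_N) (e : 'I_N -> nat -> 'cV[R]_n) :
  (forall i k, e i k.+1 = A *m \sum_j D i j *: e j k) ->
  forall k i, e i k = A ^+ k *m \sum_l (D ^+ k) i l *: e l 0.
Proof.
move=> he; elim=> [|k IH] i.
  rewrite !expr0 mul1mx (bigD1 i) //= mxE eqxx scale1r big1 ?addr0 // => l li.
  by rewrite mxE eq_sym (negPf li) scale0r.
rewrite he.
under eq_bigr do rewrite IH scalemxAr.
rewrite -mulmx_sumr mulmxA exprS -mulmxE; congr (_ *m _).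
rewrite exprS.
under [RHS]eq_bigr do rewrite -mulmxE mxE scaler_suml.
rewrite [RHS]exchange_big /=; apply: eq_bigr => j _.
rewrite scaler_sumr; apply: eq_bigr => l _; exact: scalerA.
Qed.

Lemma z_step (R : realType) n m N (A : 'M[R]_n) (B : 'M[R]_(n, m)) (K : 'M[R]_(m, n))
  (x eta : 'I_N -> nat -> 'cV[R]_n) (u : 'I_N -> nat -> 'cV[R]_m) :
  (forall i k, u i k = - (K *m eta i k)) ->
  (forall i k, x i k.+1 = A *m x i k + B *m u i k) ->
  forall i j k, x i k.+1 - x j k.+1 = (A - B *m K) *m (x i k - x j k)
     + (B *m K) *m ((x i k - eta i k) - (x j k - eta j k)).
Proof.
move=> hu hx i j k; rewrite !hx !hu !mulmxN !mulmxA mulmxBl !mulmxBr.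
exact: addid3.
Qed.

Local Close Scope complex_scope.
Unset Implicit Arguments.

Theorem theorem1 (R : realType) (n m : nat) (A : 'M[R]_n) (B : 'M[R]_(n, m))
  (K : 'M[R]_(m, n)) :
  eig_in_closed_disc A -> stabilizable A B -> schur_stable (A - B *m K) ->
  forall (N : nat), (2 <= N)%N ->
  forall (a : 'M[R]_N), weighted_adjacency a -> has_spanning_tree a ->
  forall (x eta : 'I_N -> nat -> 'cV[R]_n) (u : 'I_N -> nat -> 'cV[R]_m),
  (forall i k, u i k = - (K *m eta i k)) ->
  (forall i k, x i k.+1 = A *m x i k + B *m u i k) ->
  (forall i k, eta i k.+1 =
      A *m eta i k + B *m u i k
      + A *m (\sum_(j < N) dmat a i j *: (x i k - x j k))
      - A *m (\sum_(j < N) dmat a i j *: (eta i k - eta j k))) ->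
  forall i j, (fun k => x i k - x j k) @ \oo --> (0 : 'cV[R]_n).
Proof.
move=> Adisc _ Mstab N _ a wa [r [p [hp hr]]] x eta u hu hx heta i j.
set D := dmat a.
have sD : stoch D := conj (dmat_ge0 wa) (dmat_sum wa).
have Dd : forall i, 0 < D i i := dmat_diag wa.
have Dp : forall i, i != r -> 0 < D i (p i).
  move=> i' ir; apply: dmat_edge => //; last exact: hp.
  apply/eqP => h; have := hp i' ir; rewrite -h wa.2 ltxx //.
have [T0 [c [T0p [c0 [c1 Dc]]]]] := scramble sD Dd Dp hr.
have := geom_rate c0 c1 T0p.
set th := 1 - c / T0.+1%:R => -[th0 [th1 hth]].
have [muA [muA0 [muAeig muAbd]]] := pow_bound A.
set rho1 := (1 + th^-1) / 2.
have thinv : 1 < th^-1 by rewrite invf_gt1.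
have rho1_gt1 : 1 < rho1 by rewrite /rho1 ltr_pdivlMr // mul1r; lra.
have muA_lt : muA < rho1.
  apply: muAeig; first lra.
  move=> l hl; apply: le_lt_trans (Adisc l hl) _.
  by rewrite -(rmorph1 (real_complex R)) ltcR.
have [C1 [C10 HA]] := muAbd rho1 muA_lt.
set th2 := rho1 * th.
have th2E : th2 = (th + 1) / 2 by rewrite /th2 /rho1; field; rewrite gt_eqF.
have th20 : 0 <= th2 by rewrite /th2 mulr_ge0 // ltW //; lra.
have th21 : th2 < 1 by rewrite th2E ltr_pdivrMr //; lra.
set e := fun i k => x i k - eta i k.
have he : forall i k, e i k.+1 = A *m \sum_j D i j *: e j k.
  exact: e_step (dmat_sum wa) hx heta.
have hec := e_closed he.
set E0 := \sum_l L1 (e l 0).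
have E00 : 0 <= E0 by apply: sumr_ge0 => l _; exact: L1_ge0.
set C2 := (n * n)%:R * C1 / th ^+ T0 * E0.
have C20 : 0 <= C2.
  by rewrite /C2 !mulr_ge0 // invr_ge0 exprn_ge0 // ltW.
have hDelta : forall k, L1 (e i k - e j k) <= C2 * th2 ^+ k.
  move=> k; rewrite !hec -mulmxBr -sumrB.
  under eq_bigr do rewrite -scalerBl.
  apply: le_trans (L1M _ _) _.
  have hAk : L1 (A ^+ k) <= (n * n)%:R * (C1 * rho1 ^+ k) := L1_bound (HA k).
  have hS : L1 (\sum_l ((D ^+ k) i l - (D ^+ k) j l) *: e l 0) <= th ^+ k / th ^+ T0 * E0.
    apply: le_trans (L1_sumI _) _; rewrite /E0 mulr_sumr; apply: ler_sum => l _.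
    rewrite L1Z; apply: ler_wpM2r; first exact: L1_ge0.
    have [lo [hi [Hlh Hw]]] := osc sD T0p (ltW c0) c1 Dc l k.
    apply: le_trans (hth k); apply: le_trans Hlh.
    have /andP[a1 a2] := Hw i; have /andP[b1 b2] := Hw j.
    rewrite ler_norml; apply/andP; split; lra.
  apply: le_trans (ler_pM (L1_ge0 _) (L1_ge0 _) hAk hS) _.
  have -> : th2 ^+ k = rho1 ^+ k * th ^+ k by rewrite /th2 exprMn.
  have thT : th ^+ T0 != 0 by rewrite expf_neq0 // gt_eqF.
  by rewrite le_eqVlt; apply/orP; left; apply/eqP; rewrite /C2; field.
set M := A - B *m K.
have [muM [muM0 [muMeig muMbd]]] := pow_bound M.
have muM1 : muM < 1.
  apply: muMeig; first exact: ltr01.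
  move=> l hl; exact: Mstab.
set q := (1 + Num.max muM th2) / 2.
have mx1 : Num.max muM th2 < 1 by rewrite gt_max muM1 th21.
have hm1 : muM <= Num.max muM th2 by rewrite le_max lexx.
have hm2 : th2 <= Num.max muM th2 by rewrite le_max lexx orbT.
have qmu : muM < q by rewrite /q; lra.
have qth : th2 < q by rewrite /q; lra.
have q1 : q < 1 by rewrite /q; lra.
have [C4 [C40 HM]] := muMbd q qmu.
set z := fun k => x i k - x j k.
set w := fun k => (B *m K) *m (e i k - e j k).
have hz : forall k, z k.+1 = M *m z k + w k.
  by move=> k; rewrite /z /w /M; exact: z_step hu hx i j k.
have hML : forall k, L1 (M ^+ k) <= (n * n)%:R * C4 * q ^+ k.
  by move=> k; rewrite -mulrA; exact: L1_bound (HM k).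
have hwL : forall t, L1 (w t) <= L1 (B *m K) * C2 * th2 ^+ t.
  move=> t; apply: le_trans (L1M _ _) _; rewrite -mulrA.
  by apply: ler_wpM2l; [exact: L1_ge0 | exact: hDelta].
have hb := conv_bound (C4 := (n * n)%:R * C4) (W := L1 (B *m K) * C2) _ th20 qth _ hML hwL hz.
apply: (L1_cvg (C := (n * n)%:R * C4 * (L1 (z 0) + L1 (B *m K) * C2 / (q - th2))) (q := q)).
- by apply: le_trans th20 (ltW qth).
- exact: q1.
- move=> k; apply: hb.
  + by rewrite mulr_ge0.
  + by rewrite mulr_ge0 // L1_ge0.
Qed.
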